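(* Let $G$ be a connected graph with infinitely many nodes, not necessarily locally finite. Suppose ${}^{*}G$ has a hypernode that is not in its principal galaxy $\Gamma_0$. Then there exist galaxies $\Gamma_i$, $i\in\mathbb Z$, of ${}^{*}G$, all different from $\Gamma_0$, such that for all integers $i<j$ the galaxy $\Gamma_i$ is closer to $\Gamma_0$ than is $\Gamma_j$. In other words, there is a two-way infinite sequence of galaxies totally ordered according to their closeness to $\Gamma_0$.
   Context: Conventions. $G=\{X,B\}$ is a graph whose branches are two-element subsets of $X$, and $d$ is the graph distance. Fix a free ultrafilter $\mathcal F$ on $\mathbb N$. Hypernodes and enlargement. Hypernodes are classes $[x_n]$ of node sequences, with two sequences identified when they agree on a set in $\mathcal F$. A standard hypernode is the class of a constant sequence. ${}^{*}G$ consists of the hypernodes and the hyperbranches $[\{x_n,y_n\}]$ with $\{n:\{x_n,y_n\}\in B\}\in\mathcal F$. Galaxies. Hypernodes $[x_n]$ and $[y_n]$ are limitedly distant if $\{n:d(x_n,y_n)\le k\}\in\mathcal F$ for some $k\in\mathbb N$. Galaxies are the classes of this equivalence relation, together with the hyperbranches between their hypernodes. The principal galaxy $\Gamma_0$ contains the standard hypernodes. Closeness. For galaxies $\Gamma_a,\Gamma_b\ne\Gamma_0$, $\Gamma_a$ is closer to $\Gamma_0$ than is $\Gamma_b$ if there exist ${\bf y}=[y_n]\in\Gamma_a$, ${\bf z}=[z_n]\in\Gamma_b$ and ${\bf x}=[x_n]\in\Gamma_0$ such that for every $m\in\mathbb N$, $\{n: d(z_n,x_n)-d(y_n,x_n)\ge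 m\}\in\mathcal F$. *)

(* Defs.v *)
From Stdlib Require Import Arith List ZArith ClassicalEpsilon.

Set Implicit Arguments.

Section Graph.
Variables (X : Type) (adj : X -> X -> Prop).

Inductive walk : X -> X -> nat -> Prop :=
| walk0 x : walk x x 0
| walkS x y z n : adj x y -> walk y z n -> walk x z (S n).

Definition connected : Prop := forall x y : X, exists n, walk x y n.

(* graph distance: the least length of a walk from x to y
   (chosen by Hilbert epsilon; meaningful for connected graphs). *)
Definition dist (x y : X) : nat :=
  epsilon (inhabits 0%nat)
    (fun n => walk x y n /\ forall m, walk x y m -> (n <= m)%nat).

Definition infinite_nodes : Prop := forall l : list X, exists x, ~ In x l.
End Graph.

Definition free_ultrafilter (F : (nat -> Prop) -> Prop) : Prop :=
  F (fun _ => True) /\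
  ~ F (fun _ => False) /\
  (forall A B : nat -> Prop, F A -> (forall n, A n -> B n) -> F B) /\
  (forall A B : nat -> Prop, F A -> F B -> F (fun n => A n /\ B n)) /\
  (forall A : nat -> Prop, F A \/ F (fun n => ~ A n)) /\
  (forall k : nat, ~ F (fun n => n = k)).

Section Enlargement.
Variables (X : Type) (adj : X -> X -> Prop) (F : (nat -> Prop) -> Prop).

(* Hypernodes are represented by node sequences nat -> X. *)
Definition lim_distant (x y : nat -> X) : Prop :=
  exists k : nat, F (fun n => (dist adj (x n) (y n) <= k)%nat).

Definition in_principal (x : nat -> X) : Prop :=
  exists a : X, lim_distant x (fun _ => a).

Definition closer (a b : nat -> X) : Prop :=
  exists y z x : nat -> X,
    lim_distant y a /\ lim_distant z b /\ in_principal x /\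
    forall m : nat,
      F (fun n => (Z.of_nat (dist adj (z n) (x n)) - Z.of_nat (dist adj (y n) (x n))
                    >= Z.of_nat m)%Z).
End Enlargement.

(* Main.v *)
Require Import Defs.
From Stdlib Require Import ZArith List Lia Classical ClassicalEpsilon Arith.

Set Implicit Arguments.
Section G.
Variables (X : Type) (adj : X -> X -> Prop).
Hypothesis adj_sym : forall x y, adj x y -> adj y x.
Hypothesis Hconn : connected adj.

Lemma walk_cat x y z m n : walk adj x y m -> walk adj y z n -> walk adj x z (m + n).
Proof. induction 1; intros; simpl; [auto|]. econstructor; eauto. Qed.

Lemma walk_sym x y n : walk adj x y n -> walk adj y x n.
Proof.
  induction 1. constructor.
  replace (S n) with (n + 1) by lia. eapply walk_cat; eauto.
  econstructor; [apply adj_sym; eauto| constructor].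
Qed.

Lemma walk_split x z n : walk adj x z n -> forall t, t <= n ->
  exists v, walk adj x v t /\ walk adj v z (n - t).
Proof.
  induction 1; intros t Ht.
  - exists x. assert (t = 0) by lia. subst. split; constructor.
  - destruct t.
    + exists x. split; [constructor|]. simpl. econstructor; eauto.
    + destruct (IHwalk t) as [v [H1 H2]]; [lia|].
      exists v. split; [econstructor; eauto| exact H2].
Qed.

Lemma least (P : nat -> Prop) : (exists n, P n) -> exists n, P n /\ forall m, P m -> n <= m.
Proof.
  intros [n Hn]. apply NNPP. intro Hno.
  assert (forall k m, m <= k -> ~ P m).
  { induction k; intros m Hm HP.
    - apply Hno. exists m. split; auto. intros. lia.
    - destruct (Nat.eq_dec m (S k)).
      + subst. apply Hno. exists (S k). split; auto. intros m' Hm'.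
        destruct (le_lt_dec (S k) m'); auto. exfalso. eapply IHk; [|eauto]. lia.
      + eapply IHk; [|eauto]. lia. }
  eapply H; eauto.
Qed.

Lemma dist_spec x y : walk adj x y (dist adj x y) /\ forall m, walk adj x y m -> dist adj x y <= m.
Proof.
  unfold dist. apply epsilon_spec. apply least. apply Hconn.
Qed.

Lemma dist_sym x y : dist adj x y = dist adj y x.
Proof.
  destruct (dist_spec x y) as [A B]. destruct (dist_spec y x) as [C D].
  apply Nat.le_antisymm; [apply B | apply D]; apply walk_sym; auto.
Qed.

Lemma dist_tri x y z : dist adj x z <= dist adj x y + dist adj y z.
Proof.
  destruct (dist_spec x y) as [A _]. destruct (dist_spec y z) as [C _].
  apply (proj2 (dist_spec x z)). eapply walk_cat; eauto.
Qed.

Lemma dist_refl x : dist adj x x = 0.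
Proof. pose proof (proj2 (dist_spec x x) 0 (walk0 _ _)). lia. Qed.

Lemma node_at a s t : t <= dist adj a s -> exists v, dist adj a v = t.
Proof.
  intros Ht. destruct (dist_spec a s) as [W M].
  destruct (walk_split W Ht) as [v [H1 H2]]. exists v.
  destruct (dist_spec a v) as [W' M'].
  pose proof (M' _ H1).
  destruct (Nat.eq_dec (dist adj a v) t); auto. exfalso.
  pose proof (M _ (walk_cat W' H2)). lia.
Qed.
End G.

Theorem theorem4p2 (X : Type) (adj : X -> X -> Prop)
  (adj_sym : forall x y, adj x y -> adj y x)
  (adj_irr : forall x, ~ adj x x)
  (F : (nat -> Prop) -> Prop) (HF : free_ultrafilter F)
  (Hconn : connected adj) (Hinf : infinite_nodes X)
  (Hout : exists s : nat -> X, ~ in_principal adj F s) :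
  exists g : Z -> (nat -> X),
    (forall i : Z, ~ in_principal adj F (g i)) /\
    (forall i j : Z, (i < j)%Z -> closer adj F (g i) (g j)).
Proof.
  destruct HF as [HT [HnF [Hup [Hcap [Hult _]]]]].
  destruct Hout as [s Hs].
  set (a0 := s 0).
  set (r := fun n => dist adj a0 (s n)).
  assert (Hr : forall K, F (fun n => K < r n)).
  { intro K. destruct (Hult (fun n => K < r n)) as [H|H]; auto.
    exfalso. apply Hs. exists a0. exists K. eapply Hup; [exact H|].
    intros n Hn. simpl. rewrite (dist_sym adj_sym Hconn). unfold r in Hn. lia. }
  set (p := fun n => Nat.sqrt (r n) / 2).
  assert (Hp : forall K, F (fun n => K <= p n)).
  { intro K. eapply Hup; [apply (Hr ((2*K+1)*(2*K+1)))|].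
    intros n Hn. unfold p.
    assert (2*K+1 <= Nat.sqrt (r n)).
    { rewrite <- (Nat.sqrt_square (2*K+1)). apply Nat.sqrt_le_mono. hnf in Hn. lia. }
    pose proof (Nat.div_mod (Nat.sqrt (r n)) 2).
    pose proof (Nat.mod_upper_bound (Nat.sqrt (r n)) 2). lia. }
  assert (Hp4 : forall n, 4 * p n * p n <= r n).
  { intro n. unfold p. pose proof (Nat.sqrt_spec (r n) (Nat.le_0_l _)) as [H1 _].
    pose proof (Nat.div_mod (Nat.sqrt (r n)) 2).
    pose proof (Nat.mod_upper_bound (Nat.sqrt (r n)) 2).
    set (q := Nat.sqrt (r n)) in *. set (pp := q / 2) in *. nia. }
  set (tZ := fun (i : Z) n => (Z.of_nat (p n) * (2 * Z.of_nat (p n) + i))%Z).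
  set (T := fun i n => Nat.min (Z.to_nat (tZ i n)) (r n)).
  assert (HTe : forall i n, (Z.abs i <= Z.of_nat (p n))%Z -> Z.of_nat (T i n) = tZ i n).
  { intros i n Hi. unfold T, tZ. pose proof (Hp4 n).
    assert (0 <= Z.of_nat (p n) * (2 * Z.of_nat (p n) + i))%Z by nia.
    assert (Z.of_nat (p n) * (2 * Z.of_nat (p n) + i) <= Z.of_nat (r n))%Z by nia.
    rewrite Nat.min_l; [rewrite Z2Nat.id; lia|]. lia. }
  set (g := fun i n => epsilon (inhabits a0) (fun v => dist adj a0 v = T i n)).
  assert (Hg : forall i n, dist adj a0 (g i n) = T i n).
  { intros i n. unfold g. apply epsilon_spec.
    apply (@node_at X adj Hconn a0 (s n)). unfold T. fold (r n). apply Nat.le_min_r. }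
  assert (Hne : forall A : nat -> Prop, F A -> exists n, A n).
  { intros A HA. apply NNPP. intro H. apply HnF. eapply Hup; [exact HA|].
    intros n Hn. apply H. eauto. }
  exists g. split.
  - intros i [a [k Hk]].
    set (c := dist adj a0 a).
    destruct (Hne _ (Hcap _ _ Hk (Hp (Z.to_nat (Z.abs i) + c + k + 1)))) as [n [H1 H2]].
    pose proof (HTe i n ltac:(lia)). rewrite <- Hg in H.
    pose proof (dist_tri Hconn a0 a (g i n)).
    rewrite (dist_sym adj_sym Hconn a (g i n)) in H0. unfold tZ in H. fold c in H0. nia.
  - intros i j Hij. exists (g i), (g j), (fun _ => a0).
    assert (Hz : forall y : nat -> X, lim_distant adj F y y).
    { intro y. exists 0. eapply Hup; [exact HT|]. intros. rewrite (dist_refl Hconn); auto. }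
    split; [apply Hz|]. split; [apply Hz|]. split; [exists a0; apply Hz|].
    intro m. eapply Hup; [apply (Hp (Z.to_nat (Z.abs i) + Z.to_nat (Z.abs j) + m))|].
    intros n Hn. hnf in Hn. rewrite !(dist_sym adj_sym Hconn _ a0), !Hg.
    rewrite (HTe i n ltac:(lia)), (HTe j n ltac:(lia)). unfold tZ. nia.
Qed.
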